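(* Assume $\mathrm{recc}(C)\subseteq\mathrm{recc}(P^B)$. Fix $k\in N_2$ and assume $N_0\not\subseteq J$. Then the projection of $Q'_k$ onto the $x$-variables equals $$\Big\{x\in\mathbb{R}^N_+:\sum_{i\in S}x_i-\sum_{j\in N\setminus J}\frac{x_j}{\varepsilon'_j(S)}\le0\ \ \forall S\subseteq M'\Big\}.$$
   Context: Let $A\in\mathbb{R}^{m\times n}$ have full row rank, $b\in\mathbb{R}^m$, and $P=\{x\in\mathbb{R}^n_+:Ax=b\}$. Let $C\subseteq\mathbb{R}^n$ be an open convex set. Fix a basis $B$ of $P$ with nonbasic set $N=\{1,\dots,n\}\setminus B$. Write $P=\{x:x_i=\bar b_i-\sum_{j\in N}\bar a_{ij}x_j\ (i\in B),\ x\ge0\}$ with $\bar b\ge0$. The basic solution $\bar x$ has $\bar x_i=\bar b_i$ ($i\in B$) and $0$ ($i\in N$). $P^B$ is obtained by dropping $x_i\ge0$ for $i\in B$. For $j\in N$, $\bar r^j$ has $\bar r^j_k=-\bar a_{kj}$ ($k\in B$), $\bar r^j_j=1$, and $0$ otherwise. Thus $P^B=\{\bar x+\sum_{j\in N}x_j\bar r^j:x_j\ge0\}$. It is assumed that $\bar x\notin\mathrm{cl}(C)$. For $j\in N$, $\alpha_j=\inf\{\lambda\ge0:\bar x+\lambda\bar r^j\in C\}$ and $\beta_j=\sup\{\lambda\ge0:\bar x+\lambda\bar r^j\in C\}$, with $\alpha_j=+\infty$, $\beta_j=-\infty$ if the halfline misses $C$. Define - $N_0=\{j:\alpha_j=+\infty,\beta_j=-\infty\}$;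 - $N_2=\{j:\alpha_j\in(0,\infty),\beta_j\in(\alpha_j,\infty)\}$. For a set $K$, $\mathrm{recc}(K)=\{d:x+\lambda d\in K\ \forall x\in K,\lambda\ge0\}$. We use the convention $t/+\infty=0$. For $k\in N_2$, $S_k^C=\{\bar x\}+\mathrm{conv}\big(\bigcup_{j\in N_2}\{\lambda\bar r^j:0\le\lambda<\beta_j\}\big)+\{\lambda\bar r^k:\lambda\le0\}+\mathrm{recc}(C)$. Let $J=\{i\in N:\bar r^i\in\mathrm{recc}(S_k^C)\}$. For $i\in J$, $j\in N\setminus J$, $\gamma'_{ij}=\sup\{\gamma\ge0:\bar r^i+\gamma\bar r^j\in\mathrm{recc}(S_k^C)\}$. Let $M'=\{i\in J:\gamma'_{ij}>0\ \forall j\in N\setminus J\}$. For $S\subseteq M'$, $\varepsilon'_j(S)=\min_{i\in S}\gamma'_{ij}$ if $S\neq\emptyset$, and $+\infty$ otherwise. Extended formulation. Let $m_1=|M'|$. For each $j\in N\setminus J$ let $\pi_j:\{1,\dots,m_1\}\to M'$ be a bijection with $\gamma'_{\pi_j(1),j}\le\dots\le\gamma'_{\pi_j(m_1),j}$, and let $\ell_j=\pi_j^{-1}$. Set $1/\gamma'_{\pi_j(m_1+1),j}:=0$ (and $1/\gamma'_{\pi_j(1),j}:=0$ if $m_1=0$), and $v_{m_1+1,j}:=0$. $Q'_k$ is the set of $(x,\theta,v,\lambda)$ with $x\in\mathbb{R}^N_+$, $\theta=(\theta_{ij})\ge0$ and $v=(v_{ij})\ge0$ indexed by $i\in\{1,\dots,m_1\}$,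 $j\in N\setminus J$, and $\lambda\in\mathbb{R}^{N\setminus J}$ free, satisfying: 1. $\sum_{i=1}^{m_1}\sum_{j\in N\setminus J}\theta_{ij}+\sum_{j\in N\setminus J}\lambda_j\le0$; 2. $\lambda_j-v_{1j}+x_j/\gamma'_{\pi_j(1),j}\ge0$ for all $j\in N\setminus J$; 3. $\theta_{ij}+v_{ij}-v_{i+1,j}+\big(1/\gamma'_{\pi_j(i+1),j}-1/\gamma'_{\pi_j(i),j}\big)x_j\ge0$ for all $i=1,\dots,m_1$ and $j\in N\setminus J$; 4. $\sum_{j\in N\setminus J}\theta_{\ell_j(i),j}-x_i\ge0$ for all $i\in M'$. *)

(* Defs.v *)
From HB Require Import structures.
From mathcomp Require Import all_boot all_order all_algebra.
From mathcomp Require Import all_classical all_reals all_analysis.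
Set Implicit Arguments.
Unset Strict Implicit.
Unset Printing Implicit Defensive.
Import Order.TTheory GRing.Theory Num.Theory.
Import numFieldTopology.Exports numFieldNormedType.Exports.
Local Open Scope classical_set_scope.
Local Open Scope ring_scope.

Section Defs.
Variables (R : realType) (n : nat).
Local Notation vec := 'cV[R]_n.

Definition convex_set (K : set vec) : Prop :=
  forall x y (t : R), K x -> K y -> 0 <= t <= 1 -> K ((1 - t) *: x + t *: y).

Definition recc (K : set vec) : set vec :=
  [set d | forall x (l : R), K x -> 0 <= l -> K (x + l *: d)].

Definition msum (K L : set vec) : set vec :=
  [set z | exists a b, K a /\ L b /\ z = a + b].

Definition chull (D : set vec) : set vec :=
  [set z | exists (p : nat) (q : 'I_p -> vec) (w : 'I_p -> R),
     (forall i, D (q i)) /\ (forall i, 0 <= w i) /\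
     \sum_(i < p) w i = 1 /\ z = \sum_(i < p) w i *: q i].

Definition Pset (m : nat) (A : 'M[R]_(m, n)) (b : 'cV[R]_m) : set vec :=
  [set x | A *m x = b /\ forall i, 0 <= x i 0].

(* tableau data: basis B, abar (ab i j), bbar (bb i) *)
Variables (B : {set 'I_n}) (ab : 'I_n -> 'I_n -> R) (bb : 'I_n -> R).

Definition tableau_eqs (x : vec) : Prop :=
  forall i, i \in B -> x i 0 = bb i - \sum_(j in ~: B) ab i j * x j 0.

Definition xbar : vec := \col_i (if i \in B then bb i else 0).

Definition rbar (j : 'I_n) : vec :=
  \col_l (if l \in B then - ab l j else if l == j then 1 else 0).

(* P^B: drop the constraints x_i >= 0 for i in B *)
Definition PB : set vec :=
  [set x | tableau_eqs x /\ (forall j, j \in ~: B -> 0 <= x j 0)].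

Variable C : set vec.

Definition ray_hits (j : 'I_n) : set R :=
  [set l | 0 <= l /\ C (xbar + l *: rbar j)].

(* inf of empty set is +oo, sup of empty set is -oo, as in the paper *)
Definition alpha (j : 'I_n) : \bar R := ereal_inf [set l%:E | l in ray_hits j].
Definition beta (j : 'I_n) : \bar R := ereal_sup [set l%:E | l in ray_hits j].

Definition N0 : {set 'I_n} :=
  [set j in ~: B | (alpha j == +oo)%E && (beta j == -oo)%E].

Definition N2 : {set 'I_n} :=
  [set j in ~: B | (0%E < alpha j < +oo)%E && (alpha j < beta j < +oo)%E].

Variable k : 'I_n.

Definition SkC : set vec :=
  msum (msum (msum [set xbar]
     (chull [set z | exists j, j \in N2 /\
               exists l : R, 0 <= l /\ (l%:E < beta j)%E /\ z = l *: rbar j]))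
     [set z | exists l : R, l <= 0 /\ z = l *: rbar k])
   (recc C).

Definition Jset : {set 'I_n} := [set i in ~: B | `[< recc SkC (rbar i) >]].

Definition NJ : {set 'I_n} := (~: B) :\: Jset.

Definition gam (i j : 'I_n) : \bar R :=
  ereal_sup [set g%:E | g in [set g : R | 0 <= g /\ recc SkC (rbar i + g *: rbar j)]].

Definition Mp : {set 'I_n} := [set i in Jset | [forall j in NJ, (0%E < gam i j)%E]].

Definition eps (S : {set 'I_n}) (j : 'I_n) : \bar R :=
  \big[Order.min/+oo%E]_(i in S) gam i j.

(* 1/e with the convention 1/+oo = 0 *)
Definition inv_e (e : \bar R) : R := if e is r%:E then r^-1 else 0.

(* the right-hand side set (x only read on N) *)
Definition proj_set : set ('I_n -> R) :=
  [set x | (forall j, j \in ~: B -> 0 <= x j) /\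
     forall S : {set 'I_n}, S \subset Mp ->
       \sum_(i in S) x i - \sum_(j in NJ) x j * inv_e (eps S j) <= 0].

Definition m1 : nat := #|Mp|.

(* pi j : {1..m1} -> M' sorted bijection, ell j its inverse *)
Definition sorted_bij (pi : 'I_n -> nat -> 'I_n) (ell : 'I_n -> 'I_n -> nat) : Prop :=
  forall j, j \in NJ ->
    (forall a, (1 <= a <= m1)%N -> pi j a \in Mp /\ ell j (pi j a) = a) /\
    (forall i, i \in Mp -> (1 <= ell j i <= m1)%N /\ pi j (ell j i) = i) /\
    (forall a c, (1 <= a)%N -> (a <= c <= m1)%N -> (gam (pi j a) j <= gam (pi j c) j)%E).

(* 1/gam'_{pi_j(a), j}, with 1/gam'_{pi_j(m1+1), j} := 0 *)
Definition coef (pi : 'I_n -> nat -> 'I_n) (j : 'I_n) (a : nat) : R :=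
  if (1 <= a <= m1)%N then inv_e (gam (pi j a) j) else 0.

(* v with v_{m1+1, j} := 0 *)
Definition vv (v : nat -> 'I_n -> R) (a : nat) (j : 'I_n) : R :=
  if (a <= m1)%N then v a j else 0.

Definition Qk (pi : 'I_n -> nat -> 'I_n) (ell : 'I_n -> 'I_n -> nat) (x : 'I_n -> R)
    (th v : nat -> 'I_n -> R) (lam : 'I_n -> R) : Prop :=
  (forall j, j \in ~: B -> 0 <= x j) /\
  (forall i j, (1 <= i <= m1)%N -> j \in NJ -> 0 <= th i j /\ 0 <= v i j) /\
  \sum_(1 <= i < m1.+1) \sum_(j in NJ) th i j + \sum_(j in NJ) lam j <= 0 /\
  (forall j, j \in NJ -> 0 <= lam j - vv v 1 j + x j * coef pi j 1) /\
  (forall i j, (1 <= i <= m1)%N -> j \in NJ ->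
     0 <= th i j + v i j - vv v i.+1 j + (coef pi j i.+1 - coef pi j i) * x j) /\
  (forall i, i \in Mp -> 0 <= \sum_(j in NJ) th (ell j i) j - x i).

End Defs.

(* Main.v *)
Require Import Defs.
From HB Require Import structures.
From mathcomp Require Import all_boot all_order all_algebra.
From mathcomp Require Import all_classical all_reals all_analysis.
From mathcomp Require Import zify lra.
Import Order.TTheory GRing.Theory Num.Theory.
Local Notation fsubsetP := fintype.subsetP.
Local Notation fproperP := fintype.properP.
Local Open Scope ring_scope.

Import numFieldTopology.Exports numFieldNormedType.Exports.
Section Gen.
Variables (R : realType) (T : finType).

Lemma sum_ind (a : T) (y : R) : \sum_x (x == a)%:R * y = y.
Proof.
rewrite (bigD1 a) //= eqxx mul1r big1 ?addr0 // => x /negbTE ->; by rewrite mul0r.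
Qed.

Lemma sum_upd (F : T -> R) i0 t (S : {set T}) :
  \sum_(i in S) (F i - (i == i0)%:R * t) = \sum_(i in S) F i - (i0 \in S)%:R * t.
Proof.
rewrite sumrB; congr (_ - _).
rewrite big_mkcond /= -(sum_ind i0 ((i0 \in S)%:R * t)); apply: eq_bigr => i _.
by case: (eqVneq i i0) => [->|_]; case: ifP; rewrite ?mul1r ?mul0r.
Qed.

Lemma sumS (A : {set T}) (F : T -> R) :
  \sum_(i in A) F i = \sum_i (if i \in A then F i else 0).
Proof. exact: big_mkcond. Qed.

Lemma sum_le_sub (F : T -> R) (A B : {set T}) :
  (forall i, 0 <= F i) -> A \subset B -> \sum_(i in A) F i <= \sum_(i in B) F i.
Proof.
move=> F0 /fsubsetP AB; rewrite [X in X <= _]big_mkcond [X in _ <= X]big_mkcond /=.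
apply: ler_sum => i _; case: ifP => iA; first by rewrite (AB _ iA).
by case: ifP.
Qed.

End Gen.

Section Hall.
Variables (R : realType) (L K : finType) (E : L -> K -> bool).

Definition Nb (S : {set L}) : {set K} := [set k | [exists i in S, E i k]].
Definition hallc (d : L -> R) (c : K -> R) :=
  forall S : {set L}, \sum_(i in S) d i <= \sum_(k in Nb S) c k.
Definition isflow (f : L -> K -> R) d c :=
  [/\ forall i k, 0 <= f i k, forall i k, ~~ E i k -> f i k = 0,
      forall i, d i <= \sum_k f i k & forall k, \sum_i f i k <= c k].
Definition mu (d : L -> R) (c : K -> R) :=
  addn #|[set i | 0 < d i]| #|[set k | 0 < c k]|.

Lemma mu_le d c d' c' : (forall i, d' i <= d i) -> (forall k, c' k <= c k) ->
  (mu d' c' <= mu d c)%N.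
Proof.
move=> hd hc; apply: leq_add; apply: subset_leq_card; apply/fsubsetP => i;
  rewrite !inE => /lt_le_trans; apply; [exact: hd | exact: hc].
Qed.

Lemma mu_lt d c d' c' : (forall i, d' i <= d i) -> (forall k, c' k <= c k) ->
  ((exists i, 0 < d i /\ d' i <= 0) \/ (exists k, 0 < c k /\ c' k <= 0)) ->
  (mu d' c' < mu d c)%N.
Proof.
move=> hd hc [[i [hi hi']]|[k [hk hk']]].
- have h1 : leq (#|[set i | 0 < d' i]|).+1 #|[set i | 0 < d i]|.
    apply: proper_card; apply/fproperP; split.
      by apply/fsubsetP => j; rewrite !inE => /lt_le_trans; apply.
    by exists i; rewrite !inE // -leNgt.
  have h2 : leq #|[set k | 0 < c' k]| #|[set k | 0 < c k]|.
    by apply: subset_leq_card; apply/fsubsetP => j; rewrite !inE => /lt_le_trans; apply.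
  rewrite /mu; lia.
- have h1 : leq (#|[set i | 0 < c' i]|).+1 #|[set i | 0 < c i]|.
    apply: proper_card; apply/fproperP; split.
      by apply/fsubsetP => j; rewrite !inE => /lt_le_trans; apply.
    by exists k; rewrite !inE // -leNgt.
  have h2 : leq #|[set k | 0 < d' k]| #|[set k | 0 < d k]|.
    by apply: subset_leq_card; apply/fsubsetP => j; rewrite !inE => /lt_le_trans; apply.
  rewrite /mu; lia.
Qed.

Lemma zero_flow d c : (forall i, d i <= 0) -> (forall k, 0 <= c k) ->
  isflow (fun _ _ => 0) d c.
Proof.
move=> hd hc; split => //.
- by move=> i; rewrite big1 // => *.
- by move=> k; rewrite big1.
Qed.

Definition updL (d : L -> R) i0 t := fun i => d i - (i == i0)%:R * t.
Definition updK (c : K -> R) k0 t := fun k => c k - (k == k0)%:R * t.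

Lemma flow_route f d c i0 k0 t : 0 <= t -> E i0 k0 ->
  isflow f (updL d i0 t) (updK c k0 t) ->
  isflow (fun i k => f i k + (i == i0)%:R * ((k == k0)%:R * t)) d c.
Proof.
move=> t0 Ek [f0 fE fd fc]; split.
- move=> i k; apply: addr_ge0 => //.
  by case: eqP; case: eqP; rewrite ?mul1r ?mul0r.
- move=> i k nE; rewrite fE //.
  have : ~~ ((i == i0) && (k == k0)) by apply: contra nE => /andP[/eqP-> /eqP->].
  by case: eqP; case: eqP; rewrite ?mul1r ?mul0r ?addr0.
- move=> i; rewrite big_split /= -mulr_sumr sum_ind.
  have := fd i; rewrite /updL => h; lra.
- move=> k; rewrite big_split /= sum_ind.
  have := fc k; rewrite /updK => h; lra.
Qed.

Definition slack (d : L -> R) (c : K -> R) (S : {set L}) := \sum_(k in Nb S) c k - \sum_(i in S) d i.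

Lemma hall_route d c i0 k0 t : (forall i, 0 <= d i) -> (forall k, 0 <= c k) ->
  hallc d c -> 0 <= t -> t <= c k0 -> E i0 k0 ->
  (forall S : {set L}, i0 \notin S -> k0 \in Nb S -> (exists2 i, i \in S & 0 < d i) ->
     t <= slack d c S) ->
  hallc (updL d i0 t) (updK c k0 t).
Proof.
move=> d0 c0 hc t0 tc Ek hS S; rewrite /updL /updK !sum_upd.
case: (boolP (i0 \in S)) => iS.
  have kN : k0 \in Nb S by rewrite inE; apply/existsP; exists i0; rewrite iS.
  rewrite kN; have := hc S; rewrite !mul1r; lra.
rewrite mul0r subr0.
case: (boolP (k0 \in Nb S)) => kN; last by have := hc S; rewrite mul0r; lra.
rewrite mul1r.
case: (pselect (exists2 i, i \in S & 0 < d i)) => [ex|nex].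
  have := hS S iS kN ex; rewrite /slack; lra.
have h1 : \sum_(i in S) d i <= 0.
  apply: sumr_le0 => i iS'; rewrite leNgt; apply/negP => di; apply: nex; by exists i.
have h2 : 0 <= \sum_(k in Nb S) (c k - (k == k0)%:R * t).
  apply: sumr_ge0 => k _; have := c0 k; case: eqP => [->|]; rewrite ?mul1r ?mul0r; lra.
rewrite sum_upd kN mul1r in h2; lra.
Qed.



Lemma split_case d c (S : {set L}) :
  (forall i, 0 <= d i) -> (forall k, 0 <= c k) -> hallc d c ->
  \sum_(i in S) d i = \sum_(k in Nb S) c k ->
  (exists2 i, i \in S & 0 < d i) -> (exists2 i, i \notin S & 0 < d i) ->
  (forall d' c', (mu d' c' < mu d c)%N -> (forall i, 0 <= d' i) ->
     (forall k, 0 <= c' k) -> hallc d' c' -> exists f, isflow f d' c') ->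
  exists f, isflow f d c.
Proof.
move=> d0 c0 hc tight [i1 i1S di1] [i2 i2S di2] IH.
pose d1 i := if i \in S then d i else 0.
pose c1 k := if k \in Nb S then c k else 0.
pose d2 i := if i \in S then 0 else d i.
pose c2 k := if k \in Nb S then 0 else c k.
have d1n : forall i, 0 <= d1 i by move=> i; rewrite /d1; case: ifP.
have d2n : forall i, 0 <= d2 i by move=> i; rewrite /d2; case: ifP.
have c1n : forall i, 0 <= c1 i by move=> i; rewrite /c1; case: ifP.
have c2n : forall i, 0 <= c2 i by move=> i; rewrite /c2; case: ifP.
have h1 : hallc d1 c1.
  move=> T.
  have -> : \sum_(i in T) d1 i = \sum_(i in T :&: S) d i.
    rewrite big_mkcond [RHS]big_mkcond; apply: eq_bigr => i _.
    by rewrite inE /d1; case: (i \in T); case: (i \in S).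
  apply: le_trans (hc _) _.
  rewrite big_mkcond [X in _ <= X]big_mkcond; apply: ler_sum => k _ /=.
  case: ifP => kN; last by case: ifP.
  move: kN; rewrite inE => /existsP [i /andP [iTS Eik]]; move: iTS; rewrite inE => /andP[iT iS].
  have -> : k \in Nb T by rewrite inE; apply/existsP; exists i; rewrite iT.
  have kS : k \in Nb S by rewrite inE; apply/existsP; exists i; rewrite iS.
  by rewrite /c1 kS.
have h2 : hallc d2 c2.
  move=> T.
  have e2 : \sum_(i in T) d2 i + \sum_(i in S) d i = \sum_(i in T :|: S) d i.
    rewrite !sumS -big_split; apply: eq_bigr => i _ /=.
    by rewrite inE /d2; case: (i \in T); case: (i \in S); rewrite ?addr0 ?add0r.
  have e3 : \sum_(k in Nb (T :|: S)) c k <= \sum_(k in Nb T) c2 k + \sum_(k in Nb S) c k.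
    rewrite !sumS -big_split; apply: ler_sum => k _ /=.
    have := c0 k; have := c2n k.
    case: ifP => kU; last by case: ifP; case: ifP => _ _ ? ?; lra.
    rewrite /c2; case: (boolP (k \in Nb S)) => kS.
      by case: ifP => _ _ _; lra.
    have -> : k \in Nb T.
      move: kU; rewrite inE => /existsP [i /andP [iTS Eik]]; move: iTS; rewrite inE => /orP[iT|iS].
        by rewrite inE; apply/existsP; exists i; rewrite iT.
      by move: kS; rewrite inE => /existsP; case; exists i; rewrite iS.
    move=> _ _; lra.
  have := hc (T :|: S); lra.
have m1 : (mu d1 c1 < mu d c)%N.
  apply: mu_lt.
  - by move=> i; rewrite /d1; case: ifP.
  - by move=> i; rewrite /c1; case: ifP.
  - by left; exists i2; rewrite /d1 (negbTE i2S).
have m2 : (mu d2 c2 < mu d c)%N.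
  apply: mu_lt.
  - by move=> i; rewrite /d2; case: ifP.
  - by move=> i; rewrite /c2; case: ifP.
  - by left; exists i1; rewrite /d2 i1S.
have [f1 [f10 f1E f1d f1c]] := IH _ _ m1 d1n c1n h1.
have [f2 [f20 f2E f2d f2c]] := IH _ _ m2 d2n c2n h2.
exists (fun i k => f1 i k + f2 i k); split.
- by move=> i k; apply: addr_ge0.
- by move=> i k nE; rewrite f1E // f2E // addr0.
- move=> i; rewrite big_split /=; have := f1d i; have := f2d i.
  by rewrite /d1 /d2; case: ifP => _ ? ?; lra.
- move=> k; rewrite big_split /=; have := f1c k; have := f2c k.
  by rewrite /c1 /c2; case: ifP => _ ? ?; lra.
Qed.

Theorem hall_thm d c : (forall i, 0 <= d i) -> (forall k, 0 <= c k) ->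
  hallc d c -> exists f, isflow f d c.
Proof.
move=> d0 c0 hc; move: (leqnn (mu d c)); move: {2}(mu d c) => N.
elim: N d c d0 c0 hc => [|N IH] d c d0 c0 hc hmu.
  exists (fun _ _ => 0); apply: zero_flow => // i; rewrite leNgt; apply/negP => di.
  have : leq 1 #|[set i | 0 < d i]| by apply/card_gt0P; exists i; rewrite inE.
  by move: hmu; rewrite /mu; lia.
have IH' : forall d' c', (mu d' c' < mu d c)%N -> (forall i, 0 <= d' i) ->
     (forall k, 0 <= c' k) -> hallc d' c' -> exists f, isflow f d' c'.
  by move=> d' c' lt d'0 c'0 h'; apply: IH => //; lia.
case: (pselect (exists i, 0 < d i)) => [[i0 di0]|nod]; last first.
  exists (fun _ _ => 0); apply: zero_flow => // i; rewrite leNgt; apply/negP => di.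
  by apply: nod; exists i.
have [k0 kN ck] : exists2 k, k \in Nb [set i0] & 0 < c k.
  case: (pselect (exists2 k, k \in Nb [set i0] & 0 < c k)) => // no.
  have := hc [set i0]; rewrite big_set1 => h.
  have : \sum_(k in Nb [set i0]) c k <= 0.
    apply: sumr_le0 => k kN; rewrite leNgt; apply/negP => ck; apply: no; by exists k.
  lra.
have Ek : E i0 k0 by move: kN; rewrite inE => /existsP[i /andP[]]; rewrite inE => /eqP->.
have [t0 [t0p [t0d [t0c t0e]]]] : exists t0, 0 < t0 /\ t0 <= d i0 /\ t0 <= c k0 /\
    (t0 = d i0 \/ t0 = c k0).
  case: (leP (d i0) (c k0)) => h; [exists (d i0) | exists (c k0)]; do !split => //;
    by [left | right | lra].
pose F := fun S : {set L} => [&& i0 \notin S, k0 \in Nb S & [exists i in S, 0 < d i]].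
case: (pselect (exists S, F S && (slack d c S < t0))) => [[S0 /andP[FS0 sl0]]|noS].
  case: (arg_minP (slack d c) FS0) => Sm FSm Hmin.
  set t := slack d c Sm.
  have tlt : t < t0 by apply: le_lt_trans (Hmin _ FS0) sl0.
  have tge : 0 <= t by have := hc Sm; rewrite /t /slack; lra.
  move: FSm => /and3P [i0Sm kSm /existsP [i1 /andP [i1S di1]]].
  have hc' : hallc (updL d i0 t) (updK c k0 t).
    apply: hall_route => //; first lra.
    move=> S iS kS [i iS' di]; apply: Hmin; rewrite /F iS kS /=.
    by apply/existsP; exists i; rewrite iS' di.
  have dn : forall i, 0 <= updL d i0 t i.
    move=> i; rewrite /updL; have := d0 i; case: eqP => [->|]; rewrite ?mul1r ?mul0r; lra.
  have cn : forall k, 0 <= updK c k0 t k.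
    move=> k; rewrite /updK; have := c0 k; case: eqP => [->|]; rewrite ?mul1r ?mul0r; lra.
  have mle : (mu (updL d i0 t) (updK c k0 t) <= mu d c)%N.
    apply: mu_le => i; [rewrite /updL | rewrite /updK]; case: eqP;
      rewrite ?mul1r ?mul0r; lra.
  have [f hf] : exists f, isflow f (updL d i0 t) (updK c k0 t).
    apply: (@split_case _ _ Sm) => //.
    - rewrite /updL /updK !sum_upd kSm.
      have -> : (i0 \in Sm) = false by apply/negbTE.
      rewrite mul0r mul1r subr0 /t /slack; apply/eqP; rewrite eq_le; apply/andP; split; lra.
    - exists i1 => //; rewrite /updL; case: eqP => [e|_]; last by rewrite mul0r subr0.
      by move: i0Sm; rewrite -e i1S.
    - by exists i0 => //; rewrite /updL eqxx mul1r; lra.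
    - by move=> d' c' lt; apply: IH'; exact: leq_trans lt mle.
  by eexists; exact: (@flow_route f d c i0 k0 t tge Ek hf).
have hc' : hallc (updL d i0 t0) (updK c k0 t0).
  apply: hall_route => //; first lra.
  move=> S iS kS [i iS' di]; rewrite leNgt; apply/negP => h; apply: noS; exists S.
  rewrite /F iS kS h andbT /=; by apply/existsP; exists i; rewrite iS' di.
have dn : forall i, 0 <= updL d i0 t0 i.
  move=> i; rewrite /updL; have := d0 i; case: eqP => [->|]; rewrite ?mul1r ?mul0r; lra.
have cn : forall k, 0 <= updK c k0 t0 k.
  move=> k; rewrite /updK; have := c0 k; case: eqP => [->|]; rewrite ?mul1r ?mul0r; lra.
have mlt : (mu (updL d i0 t0) (updK c k0 t0) < mu d c)%N.
  apply: mu_lt.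
  - move=> i; rewrite /updL; case: eqP; rewrite ?mul1r ?mul0r; lra.
  - move=> i; rewrite /updK; case: eqP; rewrite ?mul1r ?mul0r; lra.
  - case: t0e => e; [left; exists i0 | right; exists k0];
      rewrite /updL /updK eqxx mul1r; split => //; lra.
have [f hf] := IH' _ _ mlt dn cn hc'.
have t0n : 0 <= t0 by lra.
by eexists; exact: (@flow_route f d c i0 k0 t0 t0n Ek hf).
Qed.

End Hall.

Arguments Nb {L K} E S.
Arguments hallc {R L K} E d c.
Arguments isflow {R L K} E f d c.
Arguments hall_thm {R L K E d c}.

Section App.
Variables (R : realType) (n : nat) (B : {set 'I_n}) (ab : 'I_n -> 'I_n -> R)
  (bb : 'I_n -> R) (C : set 'cV[R]_n) (k : 'I_n) (pi : 'I_n -> nat -> 'I_n)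
  (ell : 'I_n -> 'I_n -> nat).
Hypothesis sb : sorted_bij B ab bb C k pi ell.
Local Notation MP := (Mp B ab bb C k).
Local Notation NJs := (NJ B ab bb C k).
Local Notation G := (gam B ab bb C k).
Local Notation M1 := (m1 B ab bb C k).
Local Notation cf := (coef B ab bb C k pi).
Local Notation VV := (vv B ab bb C k).

Lemma Mp_pos i j : i \in MP -> j \in NJs -> (0 < G i j)%E.
Proof. by rewrite inE => /andP[_ /forall_inP h] /h. Qed.

Lemma Mp_notB i : i \in MP -> i \in ~: B.
Proof. by rewrite !inE => /andP[/andP[]]. Qed.

Lemma NJ_notB j : j \in NJs -> j \in ~: B.
Proof. by rewrite /NJ !inE => /andP[]. Qed.

Lemma inv_e_ge0 (e : \bar R) : (0 < e)%E -> 0 <= inv_e e.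
Proof. by case: e => //= r; rewrite lte_fin => r0; rewrite invr_ge0 ltW. Qed.

Lemma inv_e_anti (e1 e2 : \bar R) : (0 < e1)%E -> (e1 <= e2)%E -> inv_e e2 <= inv_e e1.
Proof.
case: e1 => [r1| |] //=; case: e2 => [r2| |] //=.
- rewrite !lte_fin !lee_fin => r10 r12.
  by rewrite lef_pV2 // posrE (lt_le_trans r10).
- by rewrite lte_fin => r10 _; rewrite invr_ge0 ltW.
Qed.

Lemma ell_range j i : j \in NJs -> i \in MP ->
  (1 <= ell j i <= M1)%N /\ pi j (ell j i) = i.
Proof. by move=> hj hi; case: (sb j hj) => _ [h _]; exact: h. Qed.
Arguments ell_range [j i].


Lemma pi_range j a : j \in NJs -> (1 <= a <= M1)%N ->
  pi j a \in MP /\ ell j (pi j a) = a.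
Proof. by move=> hj ha; case: (sb j hj) => h _; exact: h. Qed.
Arguments pi_range [j a].


Lemma gam_sorted j a c : j \in NJs -> (1 <= a)%N -> (a <= c <= M1)%N ->
  (G (pi j a) j <= G (pi j c) j)%E.
Proof. by move=> hj ha hc; case: (sb j hj) => _ [_ h]; exact: h. Qed.
Arguments gam_sorted [j a c].


Lemma coef_ge0 j a : j \in NJs -> 0 <= cf j a.
Proof.
move=> hj; rewrite /coef; case: ifP => // ha.
by apply: inv_e_ge0; apply: Mp_pos => //; case: (pi_range hj ha).
Qed.

Lemma coef_anti j a : j \in NJs -> (1 <= a)%N -> cf j a.+1 <= cf j a.
Proof.
move=> hj ha; rewrite /coef.
case: (ltnP a M1) => h.
  have h2 : (1 <= a <= M1)%N by rewrite ha ltnW.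
  have h1 : (1 <= a.+1 <= M1)%N by apply/andP; split.
  rewrite andbT h2; apply: inv_e_anti.
    by apply: Mp_pos => //; case: (pi_range hj h2).
  by apply: gam_sorted => //; rewrite leqnSn.
rewrite andbF.
by case: ifP => // ha'; apply: inv_e_ge0; apply: Mp_pos => //; case: (pi_range hj ha').
Qed.

Lemma coef_last j : cf j M1.+1 = 0.
Proof. by rewrite /coef ltnn andbF. Qed.

Lemma sum_ind_nat a m (y : R) : (1 <= a < m)%N ->
  \sum_(1 <= b < m) (a == b)%:R * y = y.
Proof.
move=> /andP[h1 h2].
rewrite (big_cat_nat _ (n := a)) //=; last exact: ltnW.
rewrite [X in _ + X]big_ltn //= eqxx mul1r.
rewrite big_nat_cond big1 ?add0r; last first.
  by move=> b /andP[/andP[_ hb] _]; rewrite eq_sym (ltn_eqF hb) mul0r.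
rewrite big_nat_cond big1 ?addr0 // => b /andP[/andP[hb _] _].
by rewrite (ltn_eqF hb) mul0r.
Qed.

Lemma sum_pos j (g : 'I_n -> R) : j \in NJs ->
  \sum_(1 <= b < M1.+1) g (pi j b) = \sum_(i in MP) g i.
Proof.
move=> hj.
have -> : \sum_(i in MP) g i = \sum_(i in MP) \sum_(1 <= b < M1.+1) (ell j i == b)%:R * g i.
  apply: eq_bigr => i hi; rewrite sum_ind_nat //.
  by case: (ell_range hj hi) => /andP[h1 h2] _; rewrite h1 ltnS.
rewrite exchange_big /=; apply: eq_big_nat => b /andP[hb1 hb2].
have hb : (1 <= b <= M1)%N by rewrite hb1 -ltnS.
have [hp hl] := pi_range hj hb.
rewrite (bigD1 (pi j b)) //= hl eqxx mul1r big1 ?addr0 // => i /andP[hi ne].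
case: eqP => [e|]; last by rewrite mul0r.
case: (ell_range hj hi) => _ e2; move: ne; by rewrite -e2 e eqxx.
Qed.

Lemma sum_from a m (F : nat -> R) : (1 <= a <= m)%N ->
  \sum_(1 <= b < m) (if (a <= b)%N then F b else 0) = \sum_(a <= b < m) F b.
Proof.
move=> /andP[h1 h2]; rewrite (big_cat_nat _ (n := a)) //=.
rewrite big_nat_cond big1 ?add0r; last first.
  by move=> b /andP[/andP[_ hb] _]; rewrite leqNgt hb.
by apply: eq_big_nat => b /andP[hb _]; rewrite hb.
Qed.

Lemma sum_MP_from j a (F : nat -> R) : j \in NJs -> (1 <= a <= M1.+1)%N ->
  \sum_(i in MP) (if (a <= ell j i)%N then F (ell j i) else 0) = \sum_(a <= b < M1.+1) F b.
Proof.
move=> hj ha; rewrite -(sum_pos j (fun i => if (a <= ell j i)%N then F (ell j i) else 0) hj).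
rewrite -(@sum_from a M1.+1 F ha); apply: eq_big_nat => b /andP[hb1 hb2].
have hb : (1 <= b <= M1)%N by rewrite hb1 -ltnS.
by have [_ ->] := pi_range hj hb.
Qed.

Lemma TEL j a (y : R) : j \in NJs -> (1 <= a <= M1.+1)%N ->
  \sum_(i in MP) (if (a <= ell j i)%N then y * (cf j (ell j i) - cf j (ell j i).+1) else 0)
  = y * cf j a.
Proof.
move=> hj ha; rewrite (sum_MP_from j a (fun b => y * (cf j b - cf j b.+1))) //.
rewrite -mulr_sumr; congr (_ * _).
have ha2 : (a <= M1.+1)%N by case/andP: ha.
have := telescope_sumr (cf j) ha2.
rewrite coef_last sub0r => h.
have -> : \sum_(a <= b < M1.+1) (cf j b - cf j b.+1) = - \sum_(a <= b < M1.+1) (cf j b.+1 - cf j b).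
  by rewrite -sumrN; apply: eq_bigr => b _; rewrite opprB.
by rewrite h opprK.
Qed.

Lemma EPS j (S : {set 'I_n}) ist : j \in NJs -> S \subset MP -> ist \in S ->
  (forall i, i \in S -> (ell j ist <= ell j i)%N) ->
  inv_e (eps B ab bb C k S j) = cf j (ell j ist).
Proof.
move=> hj SM istS hmin.
have istM : ist \in MP by apply: (fintype.subsetP SM).
have [hr hpi] := ell_range hj istM.
have -> : eps B ab bb C k S j = G ist j.
  apply: le_anti; apply/andP; split; first exact: bigmin_le_cond.
  apply: le_bigmin; first exact: leey.
  move=> i iS; have iM : i \in MP by apply: (fintype.subsetP SM).
  have [hr' hpi'] := ell_range hj iM.
  rewrite -{1}hpi -hpi'; apply: gam_sorted => //.
    by case/andP: hr.
  by rewrite hmin //; case/andP: hr' => _ ->.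
by rewrite /coef hr hpi.
Qed.

Arguments EPS [j S ist].

Lemma dir1 x th v lam : Qk B ab bb C k pi ell x th v lam -> proj_set B ab bb C k x.
Proof.
rewrite /Qk => -[H0 [Hnn [H1 [H2 [H3 H4]]]]].
have vvn : forall j, j \in NJs -> forall a, (1 <= a)%N -> 0 <= VV v a j.
  move=> j hj a ha; rewrite /vv; case: ifP => // haM.
  by have [] := Hnn a j (introT andP (conj ha haM)) hj.
have P : forall j, j \in NJs -> forall a, (1 <= a <= M1.+1)%N ->
    0 <= \sum_(1 <= b < a) th b j + VV v 1 j - VV v a j + (cf j a - cf j 1) * x j.
  move=> j hj; elim=> [|a IH] //; move=> /andP[h1 h2].
  case: (posnP a) => [->|ha].
    by rewrite big_geq // !subrr mul0r addr0 add0r subrr.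
  have haM : (1 <= a <= M1)%N by rewrite ha -ltnS.
  have := IH (introT andP (conj ha (ltnW h2))).
  have := H3 a j haM hj.
  rewrite big_nat_recr //=.
  have -> : VV v a j = v a j by rewrite /vv; case/andP: haM => _ ->.
  move=> ? ?; lra.
have Tge : forall j, j \in NJs -> 0 <= \sum_(1 <= b < M1.+1) th b j + lam j.
  move=> j hj; have := P j hj M1.+1 (leqnn _); have := H2 j hj.
  rewrite /vv ltnn coef_last => ? ?; lra.
have Tle : forall j, j \in NJs -> \sum_(1 <= b < M1.+1) th b j + lam j <= 0.
  move=> j hj; move: H1; rewrite exchange_big /= -big_split /= (bigD1 j) //=.
  have : 0 <= \sum_(i in NJs | i != j) (\sum_(1 <= b < M1.+1) th b i + lam i).
    by apply: sumr_ge0 => i /andP[hi _]; exact: Tge.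
  move=> ? ?; lra.
have key : forall j, j \in NJs -> forall a, (1 <= a <= M1.+1)%N ->
    \sum_(a <= b < M1.+1) th b j <= cf j a * x j.
  move=> j hj a ha; have := P j hj a ha; have := H2 j hj; have := Tle j hj.
  have := vvn j hj a (proj1 (andP ha)).
  rewrite (big_cat_nat _ (n := a) (m := 1%N) (p := M1.+1)) /=; try by case/andP: ha.
  move=> ? ? ? ?; lra.
split; first exact: H0.
move=> S SM.
have step : forall j, j \in NJs ->
    \sum_(i in S) th (ell j i) j <= x j * inv_e (eps B ab bb C k S j).
  move=> j hj; case: (set_0Vmem S) => [->|[i0 i0S]].
    by rewrite big_set0 /eps big_set0 /= mulr0.
  case: (arg_minnP (ell j) i0S) => ist istS hmin.
  rewrite (EPS hj SM istS hmin).
  have istM : ist \in MP by apply: (fintype.subsetP SM).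
  have [hr _] := ell_range hj istM.
  have hr1 : (1 <= ell j ist <= M1.+1)%N.
    by case/andP: hr => -> /= h; rewrite ltnW.
  apply: le_trans (_ : _ <= \sum_(ell j ist <= b < M1.+1) th b j) _; last first.
    by rewrite mulrC; apply: key.
  rewrite -(sum_MP_from j (ell j ist) (fun b => th b j) hj hr1).
  rewrite sumS [X in _ <= X]sumS; apply: ler_sum => i _.
  case: ifP => iS.
    by have iM := fintype.subsetP SM i iS; rewrite iM hmin.
  case: ifP => // iM; case: ifP => // _.
  by have [hr' _] := ell_range hj iM; have [] := Hnn _ j hr' hj.
rewrite subr_le0.
apply: le_trans (_ : _ <= \sum_(i in S) \sum_(j in NJs) th (ell j i) j) _.
  apply: ler_sum => i iS; have := H4 i (fintype.subsetP SM i iS); rewrite subr_ge0.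
  done.
rewrite exchange_big; apply: ler_sum => j hj; exact: step.
Qed.

Lemma dir2 x : proj_set B ab bb C k x ->
  exists th v lam, Qk B ab bb C k pi ell x th v lam.
Proof.
move=> [H0 HS].
have xM : forall i, i \in MP -> 0 <= x i by move=> i /Mp_notB /H0.
have xN : forall j, j \in NJs -> 0 <= x j by move=> j /NJ_notB /H0.
pose E := fun (i : 'I_n) (p : 'I_n * 'I_n) =>
  [&& i \in MP, p.1 \in NJs, p.2 \in MP & (ell p.1 i <= ell p.1 p.2)%N].
pose cap := fun p : 'I_n * 'I_n => if (p.1 \in NJs) && (p.2 \in MP) then
  x p.1 * (cf p.1 (ell p.1 p.2) - cf p.1 (ell p.1 p.2).+1) else 0.
pose dem := fun i => if i \in MP then x i else 0.
have dem0 : forall i, 0 <= dem i by move=> i; rewrite /dem; case: ifP => // /xM.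
have cap0 : forall p, 0 <= cap p.
  move=> [j i']; rewrite /cap /=; case: ifP => // /andP[hj hi].
  apply: mulr_ge0; first exact: xN.
  rewrite subr_ge0; apply: coef_anti => //.
  by case: (ell_range hj hi) => /andP[].
have hall : hallc E dem cap.
  move=> S; set S' := S :&: MP.
  have S'M : S' \subset MP := subsetIr S MP.
  have -> : \sum_(i in S) dem i = \sum_(i in S') x i.
    rewrite !sumS; apply: eq_bigr => i _; rewrite /dem /S' finset.in_setI.
    by case: (i \in S); case: (i \in MP).
  have := HS S' S'M; rewrite subr_le0 => h; apply: le_trans h _.
  have -> : \sum_(p in Nb E S) cap p =
      \sum_j \sum_i' (if (j, i') \in Nb E S then cap (j, i') else 0).
    by rewrite sumS pair_big /=; apply: eq_bigr => -[a b].
  rewrite sumS; apply: ler_sum => j _.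
  case: ifP => hj; last by apply: sumr_ge0 => i' _; case: ifP.
  case: (set_0Vmem S') => [e|[i0 i0S]].
    by rewrite e /eps big_set0 /= mulr0; apply: sumr_ge0 => i' _; case: ifP.
  case: (arg_minnP (ell j) i0S) => ist istS hmin.
  rewrite (EPS hj S'M istS hmin).
  have istM : ist \in MP by apply: (fintype.subsetP S'M).
  have [hr _] := ell_range hj istM.
  have hr1 : (1 <= ell j ist <= M1.+1)%N.
    by case/andP: hr => -> /= h; rewrite ltnW.
  rewrite -(@TEL j (ell j ist) (x j) hj hr1).
  rewrite sumS; apply: ler_sum => i' _.
  case: ifP => i'M; last by case: ifP.
  case: ifP => hle; last by case: ifP.
  have -> : (j, i') \in Nb E S.
    rewrite inE; apply/existsP; exists ist; rewrite /E /= istM hj i'M hle !andbT.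
    exact: (fintype.subsetP (subsetIl S MP) _ istS).
  by rewrite /cap /= hj i'M.
have [f [f0 fE fd fc]] := hall_thm dem0 cap0 hall.
pose th := fun b j => \sum_(i' : 'I_n) f (pi j b) (j, i').
pose U := fun a j => \sum_(a <= b < M1.+1) th b j.
pose vf := fun a j => cf j a * x j - U a j.
pose lam := fun j => - U 1%N j.
have Ub : forall j, j \in NJs -> forall a, (1 <= a <= M1.+1)%N -> U a j <= cf j a * x j.
  move=> j hj a ha.
  have -> : U a j = \sum_(i in MP) (if (a <= ell j i)%N then \sum_i' f i (j, i') else 0).
    rewrite /U -(sum_MP_from j a (fun b => th b j) hj ha); apply: eq_bigr => i hi.
    case: ifP => // _; rewrite /th.
    by have [_ ->] := ell_range hj hi.
  rewrite mulrC -(@TEL j a (x j) hj ha).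
  have -> : \sum_(i in MP) (if (a <= ell j i)%N then \sum_i' f i (j, i') else 0) =
      \sum_i' \sum_(i in MP) (if (a <= ell j i)%N then f i (j, i') else 0).
    rewrite exchange_big /=; apply: eq_bigr => i _.
    by case: ifP => // _; rewrite big1.
  rewrite [X in _ <= X]sumS; apply: ler_sum => i' _.
  case: (boolP (i' \in MP)) => i'M; last first.
    rewrite big1 // => i hi; case: ifP => // _; apply: fE.
    by rewrite /E /= (negbTE i'M) !andbF.
  case: (leqP a (ell j i')) => hai'.
    have -> : x j * (cf j (ell j i') - cf j (ell j i').+1) = cap (j, i').
      by rewrite /cap /= hj i'M.
    apply: le_trans (fc (j, i')).
    rewrite [X in _ <= X](bigID (mem MP)) /= -[X in X <= _]addr0; apply: lerD.
      by apply: ler_sum => i _; case: ifP => // _.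
    by apply: sumr_ge0 => i _.
  rewrite big1 //.
  move=> i hi; case: ifP => // hai; apply: fE.
  rewrite /E /= hi hj i'M /= -ltnNge.
  exact: leq_trans hai' hai.
exists th, vf, lam.
have vvE : forall a j, (a <= M1.+1)%N -> VV vf a j = vf a j.
  move=> a j ha; rewrite /vv; case: ifP => // h.
  have -> : a = M1.+1 by apply/eqP; rewrite eqn_leq ha ltnNge h.
  by rewrite /vf /U coef_last big_geq // mul0r subrr.
rewrite /Qk; split; first exact: H0.
split.
  move=> i j hi hj; split; first by apply: sumr_ge0 => i' _.
  rewrite /vf subr_ge0; apply: Ub => //.
  by case/andP: hi => -> /= h; rewrite ltnW.
split.
  rewrite /lam sumrN /U exchange_big /= subrr //.
split.
  by move=> j hj; rewrite vvE // /vf /lam; lra.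
split.
  move=> i j hi hj; rewrite vvE; last by case/andP: hi.
  have eU : U i j = th i j + U i.+1 j.
    by rewrite /U big_ltn //; case/andP: hi.
  rewrite /vf eU; lra.
move=> i hi; rewrite subr_ge0.
have := fd i; rewrite /dem hi => h; apply: le_trans h _.
have -> : \sum_p f i p = \sum_j \sum_i' f i (j, i').
  by rewrite pair_big; apply: eq_bigr => -[a b].
rewrite (bigID (mem NJs)) /= [X in _ + X]big1 ?addr0; last first.
  move=> j hj; apply: big1 => i' _; apply: fE.
  by rewrite /E /= (negbTE hj) andbF.
apply: ler_sum => j hj; rewrite /th.
by have [_ ->] := ell_range hj hi.
Qed.

End App.

Local Open Scope classical_set_scope.
Local Open Scope ring_scope.

Theorem theorem7 (R : realType) (m n : nat) (A : 'M[R]_(m, n)) (b : 'cV[R]_m)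
    (C : set 'cV[R]_n) (B : {set 'I_n}) (ab : 'I_n -> 'I_n -> R) (bb : 'I_n -> R)
    (k : 'I_n) (pi : 'I_n -> nat -> 'I_n) (ell : 'I_n -> 'I_n -> nat) :
  row_free A ->
  open C -> convex_set C ->
  #|B| = m ->
  (forall x : 'cV[R]_n, A *m x = b <-> tableau_eqs B ab bb x) ->
  (forall i, i \in B -> 0 <= bb i) ->
  ~ closure C (xbar B bb) ->
  recc C `<=` recc (PB B ab bb) ->
  k \in N2 B ab bb C ->
  ~~ (N0 B ab bb C \subset Jset B ab bb C k) ->
  sorted_bij B ab bb C k pi ell ->
  forall x : 'I_n -> R,
    (exists (th v : nat -> 'I_n -> R) (lam : 'I_n -> R),
        Qk B ab bb C k pi ell x th v lam) <->
    proj_set B ab bb C k x.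
Proof.
move=> _ _ _ _ _ _ _ _ _ _ sb x; split.
  by move=> [th [v [lam h]]]; exact: (@dir1 R n B ab bb C k pi ell sb x th v lam h).
exact: (@dir2 R n B ab bb C k pi ell sb x).
Qed.
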